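(* Let $q\ge2$, let $n_i\to\infty$, let $(R_i)$ be reals with $R_i\to\infty$, and let $(l_i)$ be positive integers such that $l_i\le\beta n_i$ for all $i$, for some constant $\beta>0$. For each $i$ let $\mathcal C_i$ be an $l_i$-shot ID code for $\Pi^q_{n_i}$ with $M_i\ge 2^{R_i n_i^{l_i(q-1)}}$ messages and type-I and type-II error probabilities $\lambda_{1,i},\lambda_{2,i}$. Then $\liminf_{i\to\infty}(\lambda_{1,i}+\lambda_{2,i})\ge1$.
   Context: Fix an integer $q\ge 2$ and let $\mathcal A_q=\{1,\dots,q\}$. For $n\ge1$ and $\sigma\in S_n$ (the symmetric group on $\{1,\dots,n\}$), $\sigma\mathbf x=(x_{\sigma^{-1}(1)},\dots,x_{\sigma^{-1}(n)})$ for $\mathbf x\in\mathcal A_q^n$. The $n$-block $q$-ary uniform permutation channel $\Pi^q_n$ has input/output alphabet $\mathcal A_q^n$ and $\Pi^q_n(\mathbf y\mid\mathbf x)=\frac1{n!}\sum_{\sigma\in S_n}\mathbf 1\{\mathbf y=\sigma\mathbf x\}$. Using it $l$ times (independently on each block) gives the channel $W^{(l)}$ on $(\mathcal A_q^n)^l$ with $W^{(l)}(\mathbf y^{(1)},\dots,\mathbf y^{(l)}\mid \mathbf x^{(1)},\dots,\mathbf x^{(l)})=\prod_{s=1}^l\Pi^q_n(\mathbf y^{(s)}\mid\mathbf x^{(s)})$. An $l$-shot ID code with $M$ messages for $\Pi^q_n$ (an ''$(n,l,M,\lambda_1,\lambda_2)$ ID code'') is a family $\{(Q_i,\mathcal D_i)\}_{i=1}^M$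 with $Q_i$ a probability distribution on $(\mathcal A_q^n)^l$ and $\mathcal D_i\subseteq(\mathcal A_q^n)^l$; its error probabilities are $\lambda_{i\to j}=\sum_{\underline{\mathbf x}}Q_i(\underline{\mathbf x})\sum_{\underline{\mathbf y}\in\mathcal D_j}W^{(l)}(\underline{\mathbf y}\mid\underline{\mathbf x})$ ($i\neq j$), $\lambda_{i\not\to i}=\sum_{\underline{\mathbf x}}Q_i(\underline{\mathbf x})\sum_{\underline{\mathbf y}\notin\mathcal D_i}W^{(l)}(\underline{\mathbf y}\mid\underline{\mathbf x})$, type-I error probability $\lambda_1=\max_i\lambda_{i\not\to i}$, type-II error probability $\lambda_2=\max_{i\ne j}\lambda_{i\to j}$. *)

(* Defs.v *)
From HB Require Import structures.
From mathcomp Require Import all_boot all_order all_algebra all_fingroup.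
From mathcomp Require Import all_classical all_reals all_analysis.
Set Implicit Arguments. Unset Strict Implicit. Unset Printing Implicit Defensive.
Import Order.TTheory GRing.Theory Num.Theory.
Local Open Scope ring_scope.

(* Alphabet A_q = {1,...,q} is modelled by 'I_q = {0,...,q-1} (relabeling). *)
Definition block (q n : nat) := {ffun 'I_n -> 'I_q}.

Definition permblock (q n : nat) (s : 'S_n) (x : block q n) : block q n :=
  [ffun j => x ((s^-1)%g j)].

Definition Pi (R : realType) (q n : nat) (y x : block q n) : R :=
  (n`!%:R)^-1 * \sum_(s : 'S_n) (if y == permblock s x then 1 else 0).

Definition lblock (q n l : nat) := {ffun 'I_l -> block q n}.

Definition Wl (R : realType) (q n l : nat) (y x : lblock q n l) : R :=
  \prod_(s < l) Pi R (y s) (x s).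

Record IDcode (R : realType) (q n l M : nat) := {
  Qd : 'I_M -> {ffun lblock q n l -> R};
  Dset : 'I_M -> {set lblock q n l};
  Qd_ge0 : forall i x, 0 <= Qd i x;
  Qd_sum1 : forall i, \sum_x Qd i x = 1
}.

Definition lam_to (R : realType) q n l M (C : IDcode R q n l M) (i j : 'I_M) : R :=
  \sum_x Qd C i x * \sum_(y in Dset C j) Wl R y x.

Definition lam_not (R : realType) q n l M (C : IDcode R q n l M) (i : 'I_M) : R :=
  \sum_x Qd C i x * \sum_(y in ~: Dset C i) Wl R y x.

Definition lambda1 (R : realType) q n l M (C : IDcode R q n l M) : R :=
  \big[Num.max/0]_(i < M) lam_not C i.

(* type-II error probability: max_{i <> j} lambda_{i -> j} (0 if M <= 1) *)
Definition lambda2 (R : realType) q n l M (C : IDcode R q n l M) : R :=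
  \big[Num.max/0]_(p : 'I_M * 'I_M | p.1 != p.2) lam_to C p.1 p.2.

(* Main.v *)
Require Import Defs.
From HB Require Import structures.
From mathcomp Require Import all_boot all_order all_algebra all_fingroup.
From mathcomp Require Import all_classical all_reals all_analysis.
From mathcomp Require Import ring lra.
Import Order.TTheory GRing.Theory Num.Theory.
Set Implicit Arguments. Unset Strict Implicit.
Local Open Scope ring_scope.

Lemma count_vec_aux k : forall N K (s : seq (seq nat)), (N + K <= k)%N -> uniq s ->
  all (fun v => (size v == N) && (sumn v <= K)%N) s -> (size s <= 2 ^ (N + K))%N.
Proof.
elim: k => [|k IH] N K s.
  rewrite leqn0 addn_eq0 => /andP[/eqP -> /eqP ->] us /allP Hs.
  have: (size s <= size [:: [::] : seq nat])%N.
    apply: uniq_leq_size => // v /Hs /andP[/eqP sv _].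
    by rewrite inE; apply/eqP/size0nil.
  by [].
case: N => [|N] hk us /allP Hs.
  have: (size s <= size [:: [::] : seq nat])%N.
    apply: uniq_leq_size => // v /Hs /andP[/eqP sv _].
    by rewrite inE; apply/eqP/size0nil.
  by move=> h; apply: leq_trans h _; rewrite /= expn_gt0.
pose a := fun v : seq nat => head 0%N v == 0%N.
rewrite -(count_predC a s).
have H0 : (count a s <= 2 ^ (N + K))%N.
  rewrite -size_filter -(size_map behead).
  apply: IH; first by move: hk; rewrite addSn ltnS.
    rewrite map_inj_in_uniq ?filter_uniq //.
    move=> v w; rewrite !mem_filter => /andP[av vs] /andP[aw ws].
    move: (Hs v vs) (Hs w ws) av aw; rewrite /a; clear vs ws.
    by case: v => [|c v] //; case: w => [|d w] //= _ _ /eqP -> /eqP -> ->.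
  apply/allP => u /mapP[v]; rewrite mem_filter => /andP[av vs] ->.
  move: (Hs v vs) av; rewrite /a; clear vs.
  case: v => [|c v] //= /andP[sv sm] /eqP c0.
  by move: sv sm; rewrite c0 add0n eqSS => -> ->.
have H1 : (count (predC a) s <= (if K is K'.+1 then 2 ^ (N.+1 + K') else 0))%N.
  case: K hk Hs H0 => [|K] hk Hs H0.
    rewrite leqn0 -(count_pred0 s); apply/eqP/eq_in_count => v vs /=.
    move: (Hs v vs); rewrite /a.
    by case: v {vs} => [|c v] //=; rewrite leqn0 addn_eq0 => /andP[_ /andP[-> _]].
  pose f := fun v : seq nat => (head 0%N v).-1 :: behead v.
  rewrite -size_filter -(size_map f).
  apply: IH; first by move: hk; rewrite addnS ltnS.
    rewrite map_inj_in_uniq ?filter_uniq //.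
    move=> v w; rewrite !mem_filter => /andP[av vs] /andP[aw ws].
    move: (Hs v vs) (Hs w ws) av aw; rewrite /a /f; clear vs ws.
    case: v => [|c v] //; case: w => [|d w] //= _ _.
    by case: c => // c; case: d => // d _ _ [-> ->].
  apply/allP => u /mapP[v]; rewrite mem_filter => /andP[av vs] ->.
  move: (Hs v vs) av; rewrite /a /f; clear vs.
  case: v => [|c v] //=; case: c => // c /andP[sv]; rewrite addSn ltnS => -> _.
case: K {hk Hs} H0 H1 => [|K] H0 H1.
  rewrite leqn0 in H1; rewrite (eqP H1) addn0.
  by apply: (leq_trans H0); rewrite leq_exp2l.
apply: leq_trans (leq_add H0 H1) _.
by rewrite !addnS !addSn addnn -mul2n -expnS.
Qed.

Lemma trunc_close (R : realType) (x a b : R) : 0 < x -> 0 <= a -> 0 <= b ->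
  Num.trunc (x * a) = Num.trunc (x * b) -> `|a - b| <= x^-1.
Proof.
move=> x0 a0 b0 E.
have h1 := truncnS_gt (x * a). have h2 := truncnS_gt (x * b).
have h3 : (Num.trunc (x * a))%:R <= x * a by rewrite truncn_le mulr_ge0 // ltW.
have h4 : (Num.trunc (x * b))%:R <= x * b by rewrite truncn_le mulr_ge0 // ltW.
rewrite E in h1 h3.
move: h1 h2 h3 h4; set t := (Num.trunc (x * b)); rewrite -natr1 => h1 h2 h3 h4.
have xi : x * x^-1 = 1 by rewrite mulfV // gt_eqF.
have xi0 : 0 < x^-1 by rewrite invr_gt0.
rewrite ler_norml; apply/andP; split; nra.
Qed.

Lemma sum_enum (R : realType) (Kt : finType) (F : Kt -> nat) :
  sumn [seq F k | k <- enum Kt] = (\sum_k F k)%N.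
Proof. by rewrite sumnE big_map big_enum. Qed.

Lemma pack (R : realType) (Kt : finType) (M m : nat) (P : 'I_M -> Kt -> R) (eps : R) :
  (0 < m)%N -> m%:R^-1 < eps ->
  (forall i k, 0 <= P i k) -> (forall i, \sum_k P i k = 1) ->
  (forall i j, i != j -> eps <= \sum_k `|P i k - P j k|) ->
  (M <= 2 ^ (#|Kt| + #|Kt| * m))%N.
Proof.
move=> m0 me P0 P1 Psep.
set N := #|Kt|; set K := (N * m)%N.
pose v i := [seq Num.trunc (K%:R * P i k) | k <- enum Kt].
have eps0 : 0 < eps by apply: le_lt_trans me; rewrite invr_ge0.
have vinj : injective v.
  move=> i j vij; apply/eqP; apply/negPn/negP => nij.
  have := Psep _ _ nij.
  case: (posnP N) => N0.
    rewrite big_pred0 => [|k]; first by rewrite leNgt eps0.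
    by apply/negP => _; move: N0; rewrite /N => /card0_eq; move=> /(_ k); rewrite inE.
  have K0 : (0 < K)%N by rewrite muln_gt0 N0.
  have : \sum_k `|P i k - P j k| <= \sum_(k : Kt) K%:R^-1.
    apply: ler_sum => k _; apply: trunc_close; rewrite ?ltr0n //.
    by move/eq_in_map: vij; apply; rewrite mem_enum.
  rewrite sumr_const -/N => h1 h2.
  have := le_trans h2 h1.
  have e : K%:R^-1 *+ N = m%:R^-1 :> R.
    rewrite /K natrM -mulr_natl; field; rewrite ?pnatr_eq0 -?lt0n ?N0 ?m0 //.
  rewrite e.
  by rewrite leNgt me.
have -> : M = size (map v (enum 'I_M)) by rewrite size_map size_enum_ord.
apply: (@count_vec_aux (N + K)) => //.
  by rewrite map_inj_uniq // enum_uniq.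
apply/allP => u /mapP[i _ ->]; rewrite size_map -cardE eqxx /=.
rewrite sum_enum // -(ler_nat R) natr_sum.
apply: le_trans (_ : \sum_k K%:R * P i k <= _).
  by apply: ler_sum => k _; rewrite truncn_le mulr_ge0.
by rewrite -mulr_sumr P1 mulr1.
Qed.

Lemma permblockM q n (s p : 'S_n) (x : block q n) :
  permblock s (permblock p x) = permblock (p * s)%g x.
Proof. by apply/ffunP => j; rewrite !ffunE invMg permM. Qed.

Lemma Pi_perm (R : realType) q n (y x : block q n) (p : 'S_n) :
  Pi R y (permblock p x) = Pi R y x.
Proof.
rewrite /Pi; congr (_ * _).
rewrite [RHS](reindex_inj (mulgI p)) /=.
by apply: eq_bigr => s _; rewrite permblockM.
Qed.

Lemma Pi_ge0 (R : realType) q n (y x : block q n) : 0 <= Pi R y x.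
Proof.
rewrite /Pi mulr_ge0 ?invr_ge0 ?ler0n // sumr_ge0 // => s _.
by case: ifP.
Qed.

Lemma sum_Pi (R : realType) q n (x : block q n) : \sum_y Pi R y x = 1.
Proof.
rewrite /Pi -mulr_sumr exchange_big /=.
under eq_bigr do rewrite -big_mkcond big_pred1_eq.
rewrite sumr_const card_Sn mulVf // pnatr_eq0 -lt0n fact_gt0 //.
Qed.

Lemma Wl_ge0 (R : realType) q n l (y x : lblock q n l) : 0 <= Wl R y x.
Proof. by rewrite /Wl prodr_ge0 // => s _; apply: Pi_ge0. Qed.

Lemma sum_Wl (R : realType) q n l (x : lblock q n l) : \sum_y Wl R y x = 1.
Proof.
rewrite /Wl -(bigA_distr_bigA (fun s y => Pi R y (x s))) /=.
by rewrite big1 // => s _; apply: sum_Pi.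
Qed.

Definition cnt q n (b : block q n) (a : 'I_q) : nat :=
  count_mem a [seq b j | j <- enum 'I_n].

Definition tkey q' n l (x : lblock q'.+1 n l) :
  {ffun 'I_l -> {ffun 'I_q' -> 'I_n.+1}} :=
  [ffun s => [ffun a => inord (cnt (x s) (widen_ord (leqnSn q') a))]].
Arguments tkey {q' n l}.

Lemma sum_cnt q (s : seq 'I_q) : (\sum_(a : 'I_q) count_mem a s)%N = size s.
Proof.
elim: s => [|y s IH] /=; first by rewrite big1.
rewrite big_split /= IH (bigD1 y) //= eqxx big1 // => a /negbTE.
by rewrite eq_sym => ->.
Qed.

Lemma cnt_le q n (b : block q n) a : (cnt b a <= n)%N.
Proof.
by apply: leq_trans (count_size _ _) _; rewrite size_map size_enum_ord.
Qed.

Lemma key_cnt q' n l (x x' : lblock q'.+1 n l) :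
  tkey x = tkey x' -> forall s a, cnt (x s) a = cnt (x' s) a.
Proof.
move=> E s.
have Hw : forall a : 'I_q', cnt (x s) (widen_ord (leqnSn q') a) =
                            cnt (x' s) (widen_ord (leqnSn q') a).
  move=> a; have := congr1 (fun k : {ffun 'I_l -> {ffun 'I_q' -> 'I_n.+1}} => val (k s a)) E; rewrite /tkey !ffunE /=.
  by rewrite !inordK // ltnS cnt_le.
move=> a; case: (ltnP a q') => ha.
  by have -> : a = widen_ord (leqnSn q') (Ordinal ha) by apply: val_inj.
have -> : a = ord_max by apply: val_inj; apply/eqP; rewrite eqn_leq ha -ltnS ltn_ord.
have S1 := sum_cnt [seq x s j | j <- enum 'I_n].
have S2 := sum_cnt [seq x' s j | j <- enum 'I_n].
rewrite (big_ord_recr q') size_map in S1.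
rewrite (big_ord_recr q') size_map in S2.
rewrite -S2 in S1.
rewrite /cnt in Hw; rewrite (eq_bigr _ (fun i _ => Hw i)) in S1.
by move: S1 => /eqP; rewrite eqn_add2l => /eqP.
Qed.

Lemma cnt_perm q n (b b' : block q n) :
  (forall a, cnt b a = cnt b' a) -> exists p : 'S_n, b' = permblock p b.
Proof.
move=> H.
have : perm_eq [tuple b' j | j < n] [tuple b j | j < n].
  apply/allP => a _ /=; apply/eqP; have := H a; rewrite /cnt => ->.
  done.
move/tuple_permP => [p E].
exists p^-1%g; apply/ffunP => j; rewrite ffunE invgK.
have E' : [tuple b' j | j < n] = [tuple tnth [tuple b j | j < n] (p i) | i < n].
  by apply: val_inj.
by have := congr1 (fun t => tnth t j) E'; rewrite !tnth_mktuple.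
Qed.

Lemma Wl_key (R : realType) q' n l (x x' : lblock q'.+1 n l) y :
  tkey x = tkey x' -> Wl R y x = Wl R y x'.
Proof.
move=> E; rewrite /Wl; apply: eq_bigr => s _.
have [p ->] := cnt_perm (key_cnt E s).
by rewrite Pi_perm.
Qed.

Lemma sep (R : realType) (X Kt : finType) (tkey : X -> Kt) (G : X -> R) (Q1 Q2 : X -> R) :
  (forall x, 0 <= G x <= 1) -> (forall x x', tkey x = tkey x' -> G x = G x') ->
  \sum_x Q1 x * G x - \sum_x Q2 x * G x <=
  \sum_k `|\sum_(x | tkey x == k) Q1 x - \sum_(x | tkey x == k) Q2 x|.
Proof.
move=> G01 Gk.
rewrite -sumrB (partition_big tkey predT) //=.
apply: le_trans (ler_norm _) _.
apply: le_trans (ler_norm_sum _ _ _) _.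
apply: ler_sum => k _.
case: (pickP (fun x => tkey x == k)) => [x0 /eqP Hx0|H0].
  rewrite (eq_bigr (fun x => (Q1 x - Q2 x) * G x0)); last first.
    by move=> x /eqP Hx; rewrite -mulrBl (Gk x x0) // Hx Hx0.
  rewrite -mulr_suml sumrB normrM.
  have /andP[g0 g1] := G01 x0.
  rewrite (ger0_norm g0); apply: ler_piMr => //.
by rewrite !big_pred0 ?subrr ?normr0.
Qed.

Lemma lam1_ge (R : realType) q n l M (C : IDcode R q n l M) i :
  lam_not C i <= lambda1 C.
Proof. by rewrite /lambda1 (bigD1 i) //= le_max lexx. Qed.

Lemma lam2_ge (R : realType) q n l M (C : IDcode R q n l M) i j :
  i != j -> lam_to C i j <= lambda2 C.
Proof. by move=> ij; rewrite /lambda2 (bigD1 (i, j)) //= le_max lexx. Qed.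

Lemma splitW (R : realType) q n l (D : {set lblock q n l}) x :
  \sum_(y in D) Wl R y x + \sum_(y in ~: D) Wl R y x = 1.
Proof.
rewrite -(sum_Wl R x) [in RHS](bigID (mem D)) /=.
by congr (_ + _); apply: eq_bigl => y; rewrite !inE.
Qed.

Lemma bound_M (R : realType) q' n l M (C : IDcode R q'.+1 n l M) (eps : R) (m : nat) :
  (0 < m)%N -> m%:R^-1 < eps -> lambda1 C + lambda2 C < 1 - eps ->
  (M <= 2 ^ (#|{ffun 'I_l -> {ffun 'I_q' -> 'I_n.+1}}|
             + #|{ffun 'I_l -> {ffun 'I_q' -> 'I_n.+1}}| * m))%N.
Proof.
move=> m0 me hl.
apply: (@pack R _ M m (fun i k => \sum_(x | tkey x == k) Qd C i x) eps) => //.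
- by move=> i k; apply: sumr_ge0 => x _; apply: Qd_ge0.
- by move=> i; rewrite -(Qd_sum1 C i) [RHS](partition_big tkey predT).
move=> i j ij.
pose G x := \sum_(y in Dset C i) Wl R y x.
have G01 : forall x, 0 <= G x <= 1.
  move=> x; have := splitW R (Dset C i) x; rewrite -/(G x) => h.
  have h1 : 0 <= G x by apply: sumr_ge0 => y _; apply: Wl_ge0.
  have h2 : 0 <= \sum_(y in ~: Dset C i) Wl R y x by apply: sumr_ge0 => y _; apply: Wl_ge0.
  apply/andP; split => //; lra.
have Gk : forall x x', tkey x = tkey x' -> G x = G x'.
  by move=> x x' E; apply: eq_bigr => y _; apply: Wl_key.
apply: le_trans (sep (Qd C i) (Qd C j) G01 Gk).
have L1 := lam1_ge C i.
have ji : j != i by rewrite eq_sym.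
have L2 := lam2_ge C ji.
have E1 : lam_not C i = 1 - \sum_x Qd C i x * G x.
  rewrite /lam_not -(Qd_sum1 C i) -sumrB; apply: eq_bigr => x _.
  have := splitW R (Dset C i) x; rewrite -/(G x) => h.
  have -> : \sum_(y in ~: Dset C i) Wl R y x = 1 - G x by lra.
  by rewrite mulrBr mulr1.
have E2 : lam_to C j i = \sum_x Qd C j x * G x by [].
rewrite E1 in L1; rewrite E2 in L2.
lra.
Qed.

Lemma final_bound (R : realType) (Q n l M m : nat) (Rs beta : R) :
  (0 < n)%N -> (l%:R <= beta * n%:R) ->
  2 `^ (Rs * n%:R ^+ (l * Q)) <= M%:R ->
  (M <= 2 ^ ((n.+1 ^ Q) ^ l * m.+1))%N ->
  Rs <= m.+1%:R * expR (beta * Q%:R).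
Proof.
move=> n0 lb hM hMb.
set k := (l * Q)%N.
have nn0 : 0 < n%:R :> R by rewrite ltr0n.
have a0 : 0 < n%:R ^+ k :> R by rewrite exprn_gt0.
have h1 : Rs * n%:R ^+ k <= ((n.+1 ^ Q) ^ l * m.+1)%:R.
  have h2 : M%:R <= 2 `^ ((n.+1 ^ Q) ^ l * m.+1)%:R :> R.
    by rewrite powR_mulrn // -natrX ler_nat.
  have h3 := le_trans hM h2.
  have l2 : 0 < ln (2 : R) by apply: ln_gt0; rewrite ltr1n.
  have h4 : ln (2 `^ (Rs * n%:R ^+ k)) <= ln (2 `^ ((n.+1 ^ Q) ^ l * m.+1)%:R) :> R.
    by rewrite ler_ln ?posrE ?powR_gt0.
  by rewrite !ln_powR ler_pM2r in h4.
move: h1; rewrite -ler_pdivlMr // natrM -expnM [(Q * l)%N]mulnC natrX -/k.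
have -> : (n.+1%:R ^+ k * m.+1%:R / n%:R ^+ k) = m.+1%:R * ((n.+1%:R / n%:R) ^+ k) :> R.
  by rewrite expr_div_n mulrAC mulrC mulrA.
move=> h; apply: le_trans h _.
rewrite ler_pM2l ?ltr0n //.
have e1 : n.+1%:R / n%:R = 1 + n%:R^-1 :> R.
  by rewrite -natr1 mulrDl mulfV ?gt_eqF // mul1r addrC.
rewrite e1.
apply: (@le_trans _ _ (expR (n%:R^-1) ^+ k)).
  apply: lerXn2r; rewrite ?nnegrE ?addr_ge0 ?invr_ge0 ?ler0n ?expR_ge0 //.
  exact: expR_ge1Dx.
rewrite -expRM_natl ler_expR /k natrM.
rewrite ler_pdivrMr //.
have Q0 : 0 <= Q%:R :> R by rewrite ler0n.
nra.
Qed.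


Unset Implicit Arguments.
Set Strict Implicit.

Theorem theorem2 (R : realType) (q : nat) (n l M : nat -> nat) (Rs : nat -> R)
  (beta : R) (C : forall i, IDcode R q (n i) (l i) (M i)) :
  (2 <= q)%N ->
  (forall K : nat, exists N : nat, forall i, (N <= i)%N -> (K <= n i)%N) ->
  (forall K : R, exists N : nat, forall i, (N <= i)%N -> K <= Rs i) ->
  0 < beta ->
  (forall i, (0 < l i)%N) ->
  (forall i, (l i)%:R <= beta * (n i)%:R) ->
  (forall i, (2 `^ (Rs i * (n i)%:R ^+ (l i * (q - 1)))) <= (M i)%:R) ->
  (1%:E <= limn_einf (fun i => (lambda1 (C i) + lambda2 (C i))%:E))%E.
Proof.
move=> q2 hn hR beta0 l0 lb hM.
case: q C hM q2 => [|[|q']] C hM q2 //.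
rewrite limn_einf_lim.
apply/lee_subgt0Pr => e e0.
have [N HN] : exists N, forall i, (N <= i)%N -> 1 - e <= lambda1 (C i) + lambda2 (C i).
  pose m := (Num.trunc e^-1).+1.
  have me : m%:R^-1 < e.
    rewrite -[X in _ < X](invrK e) ltf_pV2 ?posrE ?invr_gt0 ?ltr0n //.
    exact: truncnS_gt.
  pose B := m.+1%:R * expR (beta * q'.+1%:R).
  have [N1 H1] := hn 1%N. have [N2 H2] := hR (B + 1).
  exists (maxn N1 N2) => i; rewrite geq_max => /andP[i1 i2].
  rewrite leNgt; apply/negP => hl.
  have hb := bound_M (isT : (0 < m)%N) me hl.
  rewrite -mulnS !card_ffun !card_ord in hb.
  have hMi := hM i; rewrite subSS subn0 in hMi.
  have := final_bound (H1 i i1) (lb i) hMi hb.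
  have := H2 i i2.
  rewrite -/B; lra.
apply: lime_ge; first exact: is_cvg_einfs.
exists N => // k /= Nk.
apply: le_ereal_inf_tmp => _ [j /= kj <-].
rewrite -EFinB lee_fin; apply: HN; exact: leq_trans kj.
Qed.
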